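(* Let $n\ge1$ and $\mathbf i\in\Sigma_{n+1}$. (1) If $\mathrm{ind}_D(\mathbf i)=0$, then for every $k\in[n]$ the path in $G(\mathbf i,k)$ with wire-expression $\ell_k\to\ell_{n+1}\to\ell_{k+1}$ (go up $\ell_k$ from $L_k$ to $\ell_k\cap\ell_{n+1}$, switch to $\ell_{n+1}$, go down to $\ell_{n+1}\cap\ell_{k+1}$, switch to $\ell_{k+1}$, go down to $L_{k+1}$) is a rigorous path; it is the D-canonical path with unique peak $\ell_k\cap\ell_{n+1}$. (2) If $\mathrm{ind}_A(\mathbf i)=0$, then for every $k\in[n]$ the path in $G(\mathbf i,k)$ with wire-expression $\ell_k\to\ell_1\to\ell_{k+1}$ is a rigorous path; it is the A-canonical path with unique peak $\ell_1\cap\ell_{k+1}$.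
   Context: $N=n(n+1)/2$; $\Sigma_{n+1}$: reduced words $(i_1,\dots,i_N)$ of the longest element of $\mathfrak S_{n+1}$ in $s_i=(i,i+1)$. Wiring diagram $G(\mathbf i)$: $n+1$ wires $\ell_1,\dots,\ell_{n+1}$ run top to bottom through positions $1,\dots,n+1$; at the top $\ell_k$ is in position $k$; the $j$-th node swaps the wires in positions $i_j,i_j+1$; at the bottom $\ell_k$ is in position $n+2-k$ and ends at $L_k$. Rigorous paths: for $k\in[n]$, $G(\mathbf i,k)$ has $\ell_1,\dots,\ell_k$ oriented upward and the rest downward. A rigorous path in $G(\mathbf i,k)$ starts at $L_k$, ends at $L_{k+1}$, moves along wires in their orientation, switches wires only at their crossing node, passes each node at most once, and never passes straight through $\ell_a\cap\ell_b$ while on $\ell_a$ when both are downward with $a>b$ or both upward with $a<b$. Indices: a 2-move exchanges adjacent letters $i,j$ with $|i-j|>1$, generating $\sim$. Every $\mathbf i$ satisfies $\mathbf i\sim\mathbf i_D^-(n,\dots,1)\mathbf i_D^+\sim\mathbf i_A^-(1,\dots,n)\mathbf i_A^+$; $\mathrm{ind}_D(\mathbf i)=|\mathbf i_D^+|$, $\mathrm{ind}_A(\mathbf i)=|\mathbf i_A^+|$ (lengths; independent of choices). Equivalently $\mathrm{ind}_D(\mathbf i)$ is the number of nodes not on $\ell_{n+1}$ on the side of $\ell_{n+1}$ containing $L_1,\dots,L_n$, and $\mathrm{ind}_A(\mathbf i)$ the number of nodes not on $\ell_1$ on the side of $\ell_1$ containing $L_2,\dots,L_{n+1}$. *)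

(* Defs.v *)
From mathcomp Require Import all_boot.
Set Implicit Arguments. Unset Strict Implicit. Unset Printing Implicit Defensive.

(* Wires are the naturals 1..n+1; positions are 1..n+1.  An arrangement is a
   list whose entry at index p-1 is the wire currently in position p.
   Nodes of the diagram of a word w are indexed 0..size w - 1 (top to bottom);
   node j applies s_{w_j}, i.e. swaps the wires in positions w_j, w_j + 1. *)

Definition swap_at (s : seq nat) (p : nat) : seq nat :=
  set_nth 0 (set_nth 0 s p.-1 (nth 0 s p)) p (nth 0 s p.-1).

(* arrangement just above node j (after the first j nodes) *)
Definition arr (n : nat) (w : seq nat) (j : nat) : seq nat :=
  foldl swap_at (iota 1 n.+1) (take j w).

(* Sigma_{n+1}: words of length N = n(n+1)/2 in the letters 1..n whose
   product is the longest element (bottom arrangement is reversed, i.e.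
   ell_k ends in position n+2-k). *)
Definition Sigma (n : nat) (w : seq nat) : bool :=
  [&& size w == (n * n.+1) %/ 2,
      all (fun i => 1 <= i <= n) w &
      arr n w (size w) == rev (iota 1 n.+1)].

Definition wireL n w j := nth 0 (arr n w j) (nth 0 w j).-1.
Definition wireR n w j := nth 0 (arr n w j) (nth 0 w j).

Definition on_wire n w (a j : nat) : bool := (wireL n w j == a) || (wireR n w j == a).
Definition other n w (a j : nat) : nat := if wireL n w j == a then wireR n w j else wireL n w j.

Definition is_cross n w (a b : nat) (j : nat) : bool :=
  (j < size w) &&
  ((wireL n w j == a) && (wireR n w j == b) || (wireL n w j == b) && (wireR n w j == a)).

(* the node ell_a \cap ell_b (size w if there is none) *)
Definition xnode n w (a b : nat) : nat := find (is_cross n w a b) (iota 0 (size w)).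

Definition pos n w (a j : nat) : nat := (index a (arr n w j)).+1.

(* ind_D: nodes not on ell_{n+1} lying on the side of ell_{n+1} containing
   L_1..L_n (= right of ell_{n+1}, higher positions). *)
Definition indD n w : nat :=
  count (fun j => ~~ on_wire n w n.+1 j && (pos n w n.+1 j < nth 0 w j))
        (iota 0 (size w)).

(* ind_A: nodes not on ell_1 lying on the side of ell_1 containing
   L_2..L_{n+1} (= left of ell_1, lower positions). *)
Definition indA n w : nat :=
  count (fun j => ~~ on_wire n w 1 j && ((nth 0 w j).+1 < pos n w 1 j))
        (iota 0 (size w)).

(* In G(i,k), wires ell_1..ell_k are oriented upward, the others downward. *)
Definition up (k a : nat) : bool := a <= k.

(* A path is given by its wire-expression ws = [w_0; ...; w_m]; it switches
   from w_{s-1} to w_s at their crossing node. *)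
Definition switches n w (ws : seq nat) : seq nat :=
  [seq xnode n w p.1 p.2 | p <- zip ws (behead ws)].

(* endpoints (node indices) of the segments; size w stands for the bottom
   (the points L_k) *)
Definition seg_times n w (ws : seq nat) : seq nat :=
  size w :: rcons (switches n w ws) (size w).

(* segments: (wire, (start, end)) *)
Definition segments n w (ws : seq nat) : seq (nat * (nat * nat)) :=
  zip ws (zip (seg_times n w ws) (behead (seg_times n w ws))).

(* moving along the wire in its orientation: upward = decreasing node index *)
Definition seg_oriented (k : nat) (sg : nat * (nat * nat)) : bool :=
  if up k sg.1 then sg.2.2 < sg.2.1 else sg.2.1 < sg.2.2.

Definition straight n w (sg : nat * (nat * nat)) : seq nat :=
  [seq j <- iota 0 (size w) | on_wire n w sg.1 j &&
     (minn sg.2.1 sg.2.2 < j < maxn sg.2.1 sg.2.2)].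

Definition passed n w (ws : seq nat) : seq nat :=
  flatten [seq straight n w sg | sg <- segments n w ws] ++ switches n w ws.

Definition forbidden n w (k a j : nat) : bool :=
  let b := other n w a j in
  (~~ up k a && ~~ up k b && (b < a)) || (up k a && up k b && (a < b)).

Definition rigorous n w (k : nat) (ws : seq nat) : bool :=
  [&& head 0 ws == k, last 0 ws == k.+1,
      all (fun c => c < size w) (switches n w ws),
      all (seg_oriented k) (segments n w ws),
      uniq (passed n w ws) &
      all (fun sg => all (fun j => ~~ forbidden n w k sg.1 j) (straight n w sg))
          (segments n w ws)].

Definition peaks n w (k : nat) (ws : seq nat) : seq nat :=
  [seq xnode n w p.1 p.2 | p <- zip ws (behead ws) & up k p.1 && ~~ up k p.2].

(* merge consecutive repeated wires (so l_n -> l_{n+1} -> l_{n+1} is l_n -> l_{n+1}) *)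
Fixpoint compress (s : seq nat) : seq nat :=
  match s with
  | x :: ((y :: _) as t) => if x == y then compress t else x :: compress t
  | _ => s
  end.

(* Main.v *)
Require Import Defs.
From mathcomp Require Import all_boot zify.
Set Implicit Arguments. Unset Strict Implicit. Unset Printing Implicit Defensive.

Definition tau (p i : nat) := if i == p.-1 then p else if i == p then p.-1 else i.

Ltac ifsolve := repeat (match goal with |- context [?a == ?b] =>
   lazymatch a with context[if _ then _ else _] => fail | _ =>
   lazymatch b with context[if _ then _ else _] => fail | _ =>
   case: (eqVneq a b) => ?; rewrite /= end end end); try lia.

Lemma tauK p i : 0 < p -> tau p (tau p i) = i.
Proof. rewrite /tau => hp; ifsolve. Qed.

Lemma tau_lt p i m : 0 < p < m -> (tau p i < m) = (i < m).
Proof. rewrite /tau => hp; ifsolve. Qed.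

Lemma tau_other p i : i != p.-1 -> i != p -> tau p i = i.
Proof. by rewrite /tau => /negbTE -> /negbTE ->. Qed.

Lemma nth_swap s p i : 0 < p < size s -> nth 0 (swap_at s p) i = nth 0 s (tau p i).
Proof.
move=> hp; rewrite /swap_at !nth_set_nth /= /tau.
case: (eqVneq i p) => [->|h2].
  have -> : (p == p.-1) = false by apply/eqP; lia. done.
case: (eqVneq i p.-1) => [->|h3] //=.
  by rewrite nth_set_nth /= eqxx.
by rewrite nth_set_nth /= (negbTE h3).
Qed.

Lemma size_swap s p : 0 < p < size s -> size (swap_at s p) = size s.
Proof. move=> hp; rewrite /swap_at !size_set_nth; lia. Qed.

Lemma uniq_swap s p : 0 < p < size s -> uniq s -> uniq (swap_at s p).
Proof.
move=> hp /(uniqP 0) hu; apply/(uniqP 0) => i j; rewrite !inE size_swap // => hi hj.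
rewrite !nth_swap // => /hu h.
have := h; rewrite !inE !tau_lt // => h'.
by rewrite -(tauK i (_ : 0 < p)); [rewrite (h' hi hj) tauK //|]; lia.
Qed.

Lemma mem_swap s p a : 0 < p < size s -> (a \in swap_at s p) = (a \in s).
Proof.
move=> hp; apply/(nthP 0)/(nthP 0) => [[i hi <-]|[i hi <-]].
  exists (tau p i); last by rewrite nth_swap.
  by rewrite tau_lt //; rewrite size_swap in hi.
exists (tau p i); last by rewrite nth_swap // tauK //; lia.
by rewrite size_swap // tau_lt.
Qed.

Lemma index_swap s p a : 0 < p < size s -> uniq s ->
  index a (swap_at s p) = tau p (index a s).
Proof.
move=> hp hu; case: (boolP (a \in s)) => ha.
  have hi : index a s < size s by rewrite index_mem.
  rewrite -{1}(nth_index 0 ha) -{1}(tauK (index a s) (_ : 0 < p)); last lia.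
  rewrite -nth_swap // index_uniq // ?size_swap ?tau_lt //.
  exact: uniq_swap.
rewrite !memNindex ?mem_swap // size_swap // /tau.
have -> : (size s == p.-1) = false by apply/eqP; lia.
by have -> : (size s == p) = false by apply/eqP; lia.
Qed.

Lemma swapK s p : 0 < p < size s -> swap_at (swap_at s p) p = s.
Proof.
move=> hp; apply: (@eq_from_nth _ 0); first by rewrite !size_swap.
move=> i _; rewrite nth_swap ?size_swap // nth_swap // tauK //; lia.
Qed.

Lemma arr0 n w : arr n w 0 = iota 1 n.+1.
Proof. by rewrite /arr take0. Qed.

Lemma arrS n w j : j < size w -> arr n w j.+1 = swap_at (arr n w j) (nth 0 w j).
Proof. by move=> hj; rewrite /arr (take_nth 0 hj) foldl_rcons. Qed.

Definition letters n w := all (fun i => 1 <= i <= n) w.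

Lemma letter n w j : letters n w -> j < size w -> 0 < nth 0 w j < n.+1.
Proof. move=> /allP h hj; have /= := h _ (mem_nth 0 hj); lia. Qed.

Lemma arr_prop n w j : letters n w -> j <= size w ->
  [/\ size (arr n w j) = n.+1, uniq (arr n w j) & arr n w j =i iota 1 n.+1].
Proof.
move=> hl; elim: j => [|j IH] hj.
  by rewrite arr0 size_iota iota_uniq.
have [hs hu hm] := IH (ltnW hj).
have hp := letter hl hj.
rewrite arrS // size_swap ?hs //; split => //; first by apply: uniq_swap; rewrite ?hs.
by move=> a; rewrite mem_swap ?hs // hm.
Qed.

Definition g (s : seq nat) a b : nat := (0 < a) && (index b s < index a s).
Definition inv m s := \sum_(0 <= b < m) \sum_(0 <= a < b) g s a b.

Lemma tau_mono p q r : 0 < p -> ~~ ((q == p.-1) && (r == p)) -> ~~ ((q == p) && (r == p.-1)) ->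
  (tau p q < tau p r) = (q < r).
Proof. rewrite /tau => hp; ifsolve. Qed.

Lemma index_is s i a : uniq s -> i < size s -> (index a s == i) = (a == nth 0 s i).
Proof.
move=> hu hi; apply/eqP/eqP => [h|->]; last by rewrite index_uniq.
by rewrite -h nth_index // -index_mem h.
Qed.

Lemma g_step s p a b : uniq s -> 0 < p < size s -> (forall c, c \in s -> 0 < c) ->
  nth 0 s p.-1 < nth 0 s p -> a < b ->
  g (swap_at s p) a b = g s a b + ((a == nth 0 s p.-1) && (b == nth 0 s p)).
Proof.
move=> hu hp hpos hxy hab; rewrite /g !index_swap //.
have hx : nth 0 s p.-1 \in s by apply: mem_nth; lia.
have hy : nth 0 s p \in s by apply: mem_nth; lia.
have hp1 : p.-1 < size s by lia.
case: (eqVneq a 0) => [a0|an0].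
  rewrite a0 /=; have := hpos _ hx; case: eqP => //; lia.
have -> : (0 < a) = true by lia.
rewrite /= -!index_is //.
case: (boolP ((index a s == p.-1) && (index b s == p))) => [/andP[/eqP -> /eqP ->]|h1].
  rewrite /tau eqxx; have -> : (p == p.-1) = false by apply/eqP; lia.
  rewrite eqxx; lia.
rewrite addn0 tau_mono //; first by lia.
apply/negP => /andP[/eqP hb /eqP ha].
have : a = nth 0 s p by rewrite -ha nth_index // -index_mem ha; lia.
have : b = nth 0 s p.-1 by rewrite -hb nth_index // -index_mem hb; lia.
lia. all: first [lia | by rewrite andbC].
Qed.

Lemma sum_single m y (f : nat -> nat) : y < m -> (forall b, b != y -> f b = 0) ->
  \sum_(0 <= b < m) f b = f y.
Proof.
move=> hy hf; elim: m hy => [//|m IH] hy.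
rewrite big_nat_recr //=.
case: (eqVneq m y) => [->|hne].
  rewrite big_nat_cond big1 // => i /andP[/andP[_ hi] _]; apply: hf; rewrite neq_ltn hi.
  done.
have hym : y < m by lia.
by rewrite IH // (hf m hne) addn0.
Qed.

Lemma inv_step s p m : uniq s -> 0 < p < size s -> (forall c, c \in s -> 0 < c) ->
  nth 0 s p.-1 < nth 0 s p -> nth 0 s p < m ->
  inv m (swap_at s p) = inv m s + 1.
Proof.
move=> hu hp hpos hxy hym; rewrite /inv.
rewrite (eq_big_nat _ _ (F2 := fun b => \sum_(0 <= a < b) g s a b +
   \sum_(0 <= a < b) ((a == nth 0 s p.-1) && (b == nth 0 s p)))); last first.
  move=> b _; rewrite -big_split; apply: eq_big_nat => a ha /=; apply: g_step => //; lia.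
rewrite big_split /=; congr (_ + _).
rewrite (@sum_single m (nth 0 s p)) //.
  by rewrite (@sum_single _ (nth 0 s p.-1)) ?eqxx // => a /negbTE ->.
move=> b hb; rewrite big1 // => a _; by rewrite (negbTE hb) andbF.
Qed.

Lemma SigmaP n w : Sigma n w ->
  [/\ size w = (n * n.+1) %/ 2, letters n w & arr n w (size w) = rev (iota 1 n.+1)].
Proof. by case/and3P => /eqP ? ? /eqP ?. Qed.

Lemma index_iota1 a m : 0 < a <= m -> index a (iota 1 m) = a.-1.
Proof.
move=> ha; have h : a.-1 < size (iota 1 m) by rewrite size_iota; lia.
have := index_uniq 0 h (iota_uniq 1 m); rewrite nth_iota; last by lia.
by have -> : 1 + a.-1 = a by lia.
Qed.

Lemma index_riota a m : 0 < a <= m -> index a (rev (iota 1 m)) = m - a.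
Proof.
move=> ha; have h : m - a < size (rev (iota 1 m)) by rewrite size_rev size_iota; lia.
have := index_uniq 0 h; rewrite rev_uniq iota_uniq nth_rev ?size_iota; last by lia.
rewrite nth_iota; last by lia.
have -> : 1 + (m - (m - a).+1) = a by lia.
by move=> ->.
Qed.

Lemma sum_pos b : \sum_(0 <= a < b) (0 < a : nat) = b.-1.
Proof.
elim: b => [|b IH]; first by rewrite big_geq.
rewrite big_nat_recr //= IH; case: b {IH} => //= b; lia.
Qed.

Lemma sum_pred m : (\sum_(0 <= b < m.+2) b.-1) * 2 = m * m.+1.
Proof.
elim: m => [|m IH]; first by rewrite !big_nat_recr //= big_geq.
rewrite big_nat_recr //= mulnDl IH /=; lia.
Qed.

Lemma arr_pos n w j c : letters n w -> j <= size w -> c \in arr n w j -> 0 < c <= n.+1.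
Proof.
move=> hl hj; have [_ _ hm] := arr_prop hl hj; rewrite hm mem_iota; lia.
Qed.

Definition I n w j := inv n.+2 (arr n w j).

Lemma I0 n w : I n w 0 = 0.
Proof.
rewrite /I /inv arr0 big_nat big1 // => b hb; rewrite big_nat big1 // => a ha.
rewrite /g; case: (eqVneq a 0) => [->//|a0].
rewrite !index_iota1; lia.
Qed.

Lemma Ifinal n w : Sigma n w -> I n w (size w) = size w.
Proof.
move=> /SigmaP[hs hl ha]; rewrite /I ha /inv.
rewrite (eq_big_nat _ _ (F2 := fun b => b.-1)).
  rewrite hs; have := sum_pred n => <-; by rewrite mulnK.
move=> b hb; rewrite -sum_pos; apply: eq_big_nat => a hab; rewrite /g.
case: (eqVneq a 0) => [->//|a0].
rewrite !index_riota; lia.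
Qed.

Lemma I_step n w j : letters n w -> j < size w ->
  (wireL n w j < wireR n w j -> I n w j.+1 = I n w j + 1) /\
  (wireR n w j < wireL n w j -> I n w j = I n w j.+1 + 1).
Proof.
move=> hl hj; have hp := letter hl hj.
have [hs hu hm] := arr_prop hl (ltnW hj).
have hpos : forall c, c \in arr n w j -> 0 < c by move=> c /(arr_pos hl (ltnW hj)); lia.
have hpn : forall i, i < n.+1 -> nth 0 (arr n w j) i < n.+2.
  move=> i hi; have : nth 0 (arr n w j) i \in arr n w j by apply: mem_nth; rewrite hs.
  by move/(arr_pos hl (ltnW hj)); lia.
rewrite /wireL /wireR /I; split => hlt.
  rewrite arrS // inv_step // ?hs //; apply: hpn; lia.
set s := arr n w j; set p := nth 0 w j.
have hsp : 0 < p < size (swap_at s p) by rewrite size_swap ?hs; lia.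
have e : arr n w j.+1 = swap_at s p by rewrite arrS.
have e2 : s = swap_at (swap_at s p) p by rewrite swapK ?hs.
rewrite e {1}e2.
have hp'' : p == p.-1 = false by apply/eqP; lia.
have hsz : 0 < p < size s by rewrite hs; lia.
rewrite inv_step //; first exact: uniq_swap.
- by move=> c; rewrite mem_swap //; apply: hpos.
- rewrite (nth_swap _ hsz) (nth_swap _ hsz) /tau eqxx hp'' eqxx. done.
- rewrite (nth_swap _ hsz) /tau hp'' eqxx; apply: hpn; lia.
Qed.

Lemma wire_prop n w j : letters n w -> j < size w ->
  [/\ wireL n w j \in arr n w j, wireR n w j \in arr n w j & wireL n w j != wireR n w j].
Proof.
move=> hl hj; have hp := letter hl hj.
have [hs hu hm] := arr_prop hl (ltnW hj).
rewrite /wireL /wireR; split; [apply: mem_nth; rewrite hs; lia | apply: mem_nth; rewrite hs; lia |].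
apply/negP => /eqP e; have inj := elimT (uniqP 0) hu; have := inj _ _ _ _ e; rewrite !inE hs; lia.
Qed.

Lemma wire_lt n w j : Sigma n w -> j < size w -> wireL n w j < wireR n w j.
Proof.
move=> hS hj; have [hs hl ha] := SigmaP hS.
have Ile : forall j1 j2, j1 <= j2 <= size w -> I n w j2 <= I n w j1 + (j2 - j1).
  move=> j1; elim => [|j2 IH] hj2.
    have e0 : j1 = 0 by lia.
    rewrite e0; lia.
  case: (eqVneq j1 j2.+1) => [->|hne]; first lia.
  have := IH (ltac:(lia)).
  have [h1 h2] := I_step hl (ltac:(lia) : j2 < size w).
  have [_ _ hne'] := wire_prop hl (ltac:(lia) : j2 < size w).
  case: (ltngtP (wireL n w j2) (wireR n w j2)) => [/h1 e|/h2 e|e]; first [lia | by rewrite e eqxx in hne' | idtac].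
case: (ltngtP (wireL n w j) (wireR n w j)) => // [hgt|e]; last first.
  by have [_ _] := wire_prop hl hj; rewrite e eqxx.
have [_ h2] := I_step hl hj; have e := h2 hgt.
have := Ile 0 j (ltac:(lia)); rewrite I0 => hj1.
have := Ile j.+1 (size w) (ltac:(lia)); rewrite Ifinal //; lia.
Qed.

Lemma index_arrS n w j a : letters n w -> j < size w ->
  index a (arr n w j.+1) = tau (nth 0 w j) (index a (arr n w j)).
Proof.
move=> hl hj; have [hs hu _] := arr_prop hl (ltnW hj); have hp := letter hl hj.
rewrite arrS // index_swap // hs; lia.
Qed.

Lemma nth_arrS n w j i : letters n w -> j < size w ->
  nth 0 (arr n w j.+1) i = nth 0 (arr n w j) (tau (nth 0 w j) i).
Proof.
move=> hl hj; have [hs hu _] := arr_prop hl (ltnW hj); have hp := letter hl hj.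
rewrite arrS // nth_swap // hs; lia.
Qed.

Lemma nth_final n i : i < n.+1 -> nth 0 (rev (iota 1 n.+1)) i = n.+1 - i.
Proof.
move=> hi; rewrite nth_rev ?size_iota // nth_iota; lia.
Qed.

Lemma index_nth_eq (s : seq nat) i a : uniq s -> i < size s -> nth 0 s i = a -> index a s = i.
Proof. by move=> hu hi <-; rewrite index_uniq. Qed.

Lemma nth_neq (s : seq nat) i i' : uniq s -> i < size s -> i' < size s -> i != i' ->
  nth 0 s i != nth 0 s i'.
Proof.
move=> hu hi hi' hne; apply/negP => /eqP e.
have := elimT (uniqP 0) hu i i'; rewrite !inE => /(_ hi hi' e) /eqP; by rewrite (negbTE hne).
Qed.

Lemma is_cross_sym n w a b j : is_cross n w a b j = is_cross n w b a j.
Proof. by rewrite /is_cross orbC. Qed.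

Lemma xnode_sym n w a b : xnode n w a b = xnode n w b a.
Proof. by rewrite /xnode; apply: eq_find => j; rewrite is_cross_sym. Qed.

Lemma xnode_spec n w a b : (exists j, j < size w /\ is_cross n w a b j) ->
  xnode n w a b < size w /\ is_cross n w a b (xnode n w a b).
Proof.
move=> [j [hj hc]].
have hh : has (is_cross n w a b) (iota 0 (size w)).
  by apply/hasP; exists j => //; rewrite mem_iota.
split; first by move: hh; rewrite has_find size_iota.
have := nth_find 0 hh; rewrite nth_iota //.
by move: hh; rewrite has_find size_iota.
Qed.

Definition P n w j := index n.+1 (arr n w j).

Lemma P_lt n w j : letters n w -> j <= size w -> P n w j < n.+1.
Proof.
move=> hl hj; have [hs hu hm] := arr_prop hl hj.
rewrite /P -hs index_mem hm mem_iota; lia.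
Qed.

Lemma indD0 n w j : indD n w = 0 -> j < size w -> ~~ on_wire n w n.+1 j ->
  nth 0 w j <= (P n w j).+1.
Proof.
move=> h hj hno.
have : ~~ has (fun j => ~~ on_wire n w n.+1 j && (pos n w n.+1 j < nth 0 w j)) (iota 0 (size w)).
  by rewrite has_count; move: h; rewrite /indD => ->.
move/hasPn => /(_ j); rewrite mem_iota hj /= hno /= /pos => /(_ isT); rewrite /P; lia.
Qed.

Lemma D_step n w j : Sigma n w -> indD n w = 0 -> j < size w ->
  (on_wire n w n.+1 j -> [/\ nth 0 w j = P n w j, wireR n w j = n.+1 & P n w j.+1 = (P n w j).-1]) /\
  (~~ on_wire n w n.+1 j -> nth 0 w j < P n w j /\ P n w j.+1 = P n w j).
Proof.
move=> hS hD hj; have [_ hl _] := SigmaP hS.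
have [hs hu hm] := arr_prop hl (ltnW hj); have hp := letter hl hj.
have hlt := wire_lt hS hj.
have [_ hR _] := wire_prop hl hj.
have hRb := arr_pos hl (ltnW hj) hR.
split => hon.
  have hwR : wireR n w j = n.+1.
    move: hon; rewrite /on_wire; case/orP => /eqP e //; lia.
  have e : P n w j = nth 0 w j by rewrite /P -hwR /wireR index_uniq // hs; lia.
  split => //; rewrite /P index_arrS // -/(P n w j) e /tau.
  have -> : (nth 0 w j == (nth 0 w j).-1) = false by apply/eqP; lia.
  by rewrite eqxx.
have h1 := indD0 hD hj hon.
move: hon; rewrite /on_wire negb_or => /andP[hL' hR'].
have hne1 : (nth 0 w j).-1 != P n w j.
  apply/negP => /eqP e; move: hL'; rewrite /wireL e /P nth_index ?eqxx //.
  by rewrite hm mem_iota; lia.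
have hne2 : nth 0 w j != P n w j.
  apply/negP => /eqP e; move: hR'; rewrite /wireR e /P nth_index ?eqxx //.
  by rewrite hm mem_iota; lia.
split; first by lia.
rewrite /P index_arrS // -/(P n w j) tau_other //.
- by rewrite eq_sym.
- by rewrite eq_sym.
Qed.

Lemma D_le n w j : Sigma n w -> indD n w = 0 -> j < size w -> nth 0 w j <= P n w j.
Proof.
move=> hS hD hj; have [h1 h2] := D_step hS hD hj.
case: (boolP (on_wire n w n.+1 j)) => [/h1[-> _ _]//|/h2[? _]]; lia.
Qed.

Lemma D_inv n w j i : Sigma n w -> indD n w = 0 -> j <= size w ->
  P n w j < i < n.+1 -> nth 0 (arr n w j) i = n.+1 - i.
Proof.
move=> hS hD; have [hs hl ha] := SigmaP hS.
move: {2}(size w - j) (erefl (size w - j)) => d.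
elim: d j => [|d IH] j hd hj hi.
  have -> : j = size w by lia.
  by rewrite ha nth_final; lia.
have hj' : j < size w by lia.
have hle := D_le hS hD hj'.
have hmono : P n w j.+1 <= P n w j.
  have [h1 h2] := D_step hS hD hj'.
  case: (boolP (on_wire n w n.+1 j)) => [/h1[_ _ ->]|/h2[_ ->]]; lia.
rewrite -(IH j.+1) ?nth_arrS //; try lia.
rewrite tau_other //; apply/eqP; lia.
Qed.

Lemma D_cross n w j : Sigma n w -> indD n w = 0 -> j < size w -> on_wire n w n.+1 j ->
  [/\ wireL n w j = n.+1 - P n w j, 0 < P n w j & nth 0 (arr n w j.+1) (P n w j) = wireL n w j].
Proof.
move=> hS hD hj hon; have [hs hl ha] := SigmaP hS.
have [e1 _] := D_step hS hD hj; have [eq1 eq2 eq3] := e1 hon.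
have hp := letter hl hj.
have hplt := P_lt hl (ltnW hj).
have hn : nth 0 (arr n w j.+1) (P n w j) = wireL n w j.
  rewrite nth_arrS // /wireL eq1 /tau.
  have -> : (P n w j == (P n w j).-1) = false by apply/eqP; lia.
  by rewrite eqxx.
split => //; last lia.
rewrite -hn D_inv //; lia.
Qed.

Lemma D_stepP n w j : Sigma n w -> indD n w = 0 -> j < size w ->
  P n w j.+1 = if on_wire n w n.+1 j then (P n w j).-1 else P n w j.
Proof.
move=> hS hD hj; have [h1 h2] := D_step hS hD hj.
by case: (boolP (on_wire n w n.+1 j)) => [/h1[_ _ ->]|/h2[_ ->]].
Qed.

Lemma D_mono n w j1 j2 : Sigma n w -> indD n w = 0 -> j1 <= j2 <= size w ->
  P n w j2 <= P n w j1.
Proof.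
move=> hS hD; elim: j2 => [|j2 IH] hj; first by have -> : j1 = 0 by lia.
case: (eqVneq j1 j2.+1) => [->//|hne].
have := IH (ltac:(lia)); rewrite D_stepP //; last lia.
case: ifP => _; lia.
Qed.

Lemma P0 n w : P n w 0 = n.
Proof. by rewrite /P arr0 index_iota1 //; lia. Qed.

Lemma Pend n w : Sigma n w -> P n w (size w) = 0.
Proof. by move=> /SigmaP[_ _ ha]; rewrite /P ha index_riota //; lia. Qed.

Lemma D_exists n w v : Sigma n w -> indD n w = 0 -> 0 < v <= n ->
  exists j, [/\ j < size w, on_wire n w n.+1 j & P n w j = v].
Proof.
move=> hS hD hv.
suff : forall m, m <= size w -> P n w m < v -> exists j, [/\ j < size w, on_wire n w n.+1 j & P n w j = v].
  move=> H; apply: (H (size w)) => //; rewrite Pend //; lia.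
elim => [|m IH] hm hlt; first by rewrite P0 in hlt; lia.
case: (ltnP (P n w m) v) => h; first by apply: IH => //; lia.
have hm' : m < size w by lia.
move: hlt; rewrite D_stepP //.
case: ifP => hon hlt; last lia.
by exists m; split => //; lia.
Qed.

Lemma D_cross_iff n w a j : Sigma n w -> indD n w = 0 -> 0 < a <= n -> j < size w ->
  is_cross n w a n.+1 j = on_wire n w n.+1 j && (P n w j == n.+1 - a).
Proof.
move=> hS hD ha hj.
have hlt := wire_lt hS hj.
apply/idP/idP.
  rewrite /is_cross hj /= => /orP[/andP[/eqP hL /eqP hR]|/andP[/eqP hL /eqP hR]]; last lia.
  have hon : on_wire n w n.+1 j by rewrite /on_wire hR eqxx orbT.
  have [e _ _] := D_cross hS hD hj hon.
  rewrite hon /=; apply/eqP; have := P_lt (proj1 (and3_rec (fun _ b _ => conj b b) (SigmaP hS))) (ltnW hj); lia.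
case/andP => hon /eqP hP.
have [e _ _] := D_cross hS hD hj hon.
have [h1 _] := D_step hS hD hj; have [_ hR _] := h1 hon.
rewrite /is_cross hj hR eqxx /= andbT; apply/orP; left; apply/eqP; lia.
Qed.

Lemma D_frozen n w j0 i0 a j : Sigma n w -> indD n w = 0 -> j0 <= j -> j < size w ->
  P n w j0 < i0 < n.+1 -> nth 0 (arr n w j0) i0 = a -> ~~ on_wire n w a j.
Proof.
move=> hS hD hj0 hj hi ha; have [hs hl hfin] := SigmaP hS.
have hPj : P n w j <= P n w j0 by apply: D_mono => //; lia.
have hnj : nth 0 (arr n w j) i0 = a.
  by rewrite D_inv //; [rewrite -ha D_inv //; lia | lia | lia].
have [hsz hu _] := arr_prop hl (ltnW hj).
have hle := D_le hS hD hj; have hp := letter hl hj.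
rewrite /on_wire /wireL /wireR -hnj.
rewrite (negbTE (nth_neq hu _ _ _)) ?(negbTE (nth_neq hu _ _ _)) ?hsz //; try lia.
all: apply/eqP; lia.
Qed.

Lemma straight_nil n w a x y :
  (forall j, j < size w -> minn x y < j < maxn x y -> ~~ on_wire n w a j) ->
  straight n w (a, (x, y)) = [::].
Proof.
move=> h; rewrite /straight; apply/eqP; rewrite -[_ == _]negbK -has_filter.
apply/hasPn => j; rewrite mem_iota /= => hj.
case: (boolP (minn x y < j < maxn x y)) => hm; last by rewrite andbF.
by rewrite (negbTE (h j (ltac:(lia)) hm)).
Qed.

Lemma rig3 n w k a b c :
  a = k -> c = k.+1 -> xnode n w a b < size w -> xnode n w b c < size w ->
  xnode n w a b != xnode n w b c ->
  seg_oriented k (a, (size w, xnode n w a b)) ->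
  seg_oriented k (b, (xnode n w a b, xnode n w b c)) ->
  seg_oriented k (c, (xnode n w b c, size w)) ->
  straight n w (a, (size w, xnode n w a b)) = [::] ->
  straight n w (b, (xnode n w a b, xnode n w b c)) = [::] ->
  straight n w (c, (xnode n w b c, size w)) = [::] ->
  rigorous n w k [:: a; b; c].
Proof.
move=> -> -> h1 h2 h12 o1 o2 o3 s1 s2 s3.
rewrite /rigorous /passed /segments /seg_times /switches /= s1 s2 s3 /=.
by rewrite !eqxx h1 h2 o1 o2 o3 /= inE h12.
Qed.

Lemma rig2 n w k a b :
  a = k -> b = k.+1 -> xnode n w a b < size w ->
  seg_oriented k (a, (size w, xnode n w a b)) ->
  seg_oriented k (b, (xnode n w a b, size w)) ->
  straight n w (a, (size w, xnode n w a b)) = [::] ->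
  straight n w (b, (xnode n w a b, size w)) = [::] ->
  rigorous n w k [:: a; b].
Proof.
move=> -> -> h1 o1 o2 s1 s2.
rewrite /rigorous /passed /segments /seg_times /switches /= s1 s2 /=.
by rewrite !eqxx h1 o1 o2.
Qed.

Lemma D_xnode n w a : Sigma n w -> indD n w = 0 -> 0 < a <= n ->
  let t := xnode n w a n.+1 in
  [/\ t < size w, on_wire n w n.+1 t, P n w t = n.+1 - a,
      P n w t.+1 = n - a & nth 0 (arr n w t.+1) (P n w t) = a].
Proof.
move=> hS hD ha /=.
have hv : 0 < n.+1 - a <= n by lia.
have [j [hj hon hP]] := D_exists hS hD hv.
have hc0 : is_cross n w a n.+1 j by rewrite D_cross_iff // hon hP eqxx.
have [ht hc] := xnode_spec (ex_intro _ j (conj hj hc0)).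
move: hc; rewrite D_cross_iff // => /andP[hon' /eqP hP'].
have [e _ hn] := D_cross hS hD ht hon'.
have [h1 _] := D_step hS hD ht; have [_ _ hP1] := h1 hon'.
split => //; first by rewrite hP1 hP'; lia.
rewrite hn e hP'; lia.
Qed.

Lemma seg_orE k a x y : seg_oriented k (a, (x, y)) = if a <= k then y < x else x < y.
Proof. by []. Qed.

Lemma partD n w k : Sigma n w -> indD n w = 0 -> 1 <= k <= n ->
  rigorous n w k (compress [:: k; n.+1; k.+1]) /\
  peaks n w k (compress [:: k; n.+1; k.+1]) = [:: xnode n w k n.+1].
Proof.
move=> hS hD hk.
have [ht hon hPt hPt1 hnt] := D_xnode hS hD (ltac:(lia) : 0 < k <= n).
set t := xnode n w k n.+1 in ht hon hPt hPt1 hnt *.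
have hlt := P_lt (let: And3 _ h _ := SigmaP hS in h) (ltnW ht).
have s1 : straight n w (k, (size w, t)) = [::].
  apply: straight_nil => j hj hm.
  apply: (D_frozen (j0 := t.+1) (i0 := P n w t)) => //; lia.
case: (ltnP k n) => hkn'.
  have hc : compress [:: k; n.+1; k.+1] = [:: k; n.+1; k.+1].
    rewrite /=; have -> : (k == n.+1) = false by apply/eqP; lia.
    by have -> : (n.+1 == k.+1) = false by apply/eqP; lia.
  rewrite hc.
  have [ht' hon' hPt' hPt1' hnt'] := D_xnode hS hD (ltac:(lia) : 0 < k.+1 <= n).
  rewrite -xnode_sym in ht' hon' hPt' hPt1' hnt'.
  set t' := xnode n w n.+1 k.+1 in ht' hon' hPt' hPt1' hnt' *.
  have hlt' := P_lt (let: And3 _ h _ := SigmaP hS in h) (ltnW ht').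
  have htt : t < t'.
    case: (ltnP t t') => // h; have := D_mono hS hD (ltac:(lia) : t' <= t <= size w); lia.
  split; last first.
    by rewrite /peaks /= /up leqnn /=; have -> : (n.+1 <= k) = false by lia.
  apply: rig3 => //.
  - by rewrite neq_ltn htt.
  - by rewrite seg_orE leqnn.
  - by rewrite seg_orE; have -> : (n.+1 <= k) = false by lia.
  - by rewrite seg_orE; have -> : (k.+1 <= k) = false by lia.
  - apply: straight_nil => j hj hm; apply/negP => hj_on.
    have [h1 _] := D_step hS hD hj; have [_ _ hPj1] := h1 hj_on.
    have := D_mono hS hD (ltac:(lia) : t.+1 <= j <= size w).
    have := D_mono hS hD (ltac:(lia) : j.+1 <= t' <= size w).
    have [_ hpos _] := D_cross hS hD hj hj_on.
    lia.
  - apply: straight_nil => j hj hm.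
    apply: (D_frozen (j0 := t'.+1) (i0 := P n w t')) => //; lia.
have ekn : k = n by lia.
have hc : compress [:: k; n.+1; k.+1] = [:: k; n.+1].
  by rewrite /= ekn eqxx; have -> : (n == n.+1) = false by apply/eqP; lia.
rewrite hc; split; last by rewrite /peaks /= /up leqnn /=; have -> : (n.+1 <= k) = false by lia.
apply: rig2 => //.
- by rewrite ekn.
- by rewrite seg_orE leqnn.
- by rewrite seg_orE; have -> : (n.+1 <= k) = false by lia.
- apply: straight_nil => j hj hm; apply/negP => hj_on.
  have := D_mono hS hD (ltac:(lia) : t.+1 <= j <= size w).
  have [_ hpos _] := D_cross hS hD hj hj_on.
  lia.
Qed.

Definition Q n w j := index 1 (arr n w j).

Lemma Q_lt n w j : letters n w -> j <= size w -> Q n w j < n.+1.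
Proof.
move=> hl hj; have [hs hu hm] := arr_prop hl hj.
rewrite /Q -hs index_mem hm mem_iota; lia.
Qed.

Lemma indA0 n w j : indA n w = 0 -> j < size w -> ~~ on_wire n w 1 j ->
  Q n w j <= nth 0 w j.
Proof.
move=> h hj hno.
have : ~~ has (fun j => ~~ on_wire n w 1 j && ((nth 0 w j).+1 < pos n w 1 j)) (iota 0 (size w)).
  by rewrite has_count; move: h; rewrite /indA => ->.
move/hasPn => /(_ j); rewrite mem_iota hj /= hno /= /pos => /(_ isT); rewrite /Q; lia.
Qed.

Lemma A_step n w j : Sigma n w -> indA n w = 0 -> j < size w ->
  (on_wire n w 1 j -> [/\ (nth 0 w j).-1 = Q n w j, wireL n w j = 1 & Q n w j.+1 = (Q n w j).+1]) /\
  (~~ on_wire n w 1 j -> (Q n w j).+1 < nth 0 w j /\ Q n w j.+1 = Q n w j).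
Proof.
move=> hS hD hj; have [_ hl _] := SigmaP hS.
have [hs hu hm] := arr_prop hl (ltnW hj); have hp := letter hl hj.
have hlt := wire_lt hS hj.
have [hL _ _] := wire_prop hl hj.
have hLb := arr_pos hl (ltnW hj) hL.
split => hon.
  have hwL : wireL n w j = 1.
    move: hon; rewrite /on_wire; case/orP => /eqP e //; lia.
  have e : Q n w j = (nth 0 w j).-1 by rewrite /Q -hwL /wireL index_uniq // hs; lia.
  split => //; rewrite /Q index_arrS // -/(Q n w j) e /tau eqxx; lia.
have h1 := indA0 hD hj hon.
move: hon; rewrite /on_wire negb_or => /andP[hL' hR'].
have hne1 : (nth 0 w j).-1 != Q n w j.
  apply/negP => /eqP e; move: hL'; rewrite /wireL e /Q nth_index ?eqxx //.
  all: try by rewrite hm mem_iota; lia.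
have hne2 : nth 0 w j != Q n w j.
  apply/negP => /eqP e; move: hR'; rewrite /wireR e /Q nth_index ?eqxx //.
  all: try by rewrite hm mem_iota; lia.
split; first by lia.
rewrite /Q index_arrS // -/(Q n w j) tau_other //.
- by rewrite eq_sym.
- by rewrite eq_sym.
Qed.

Lemma A_le n w j : Sigma n w -> indA n w = 0 -> j < size w -> Q n w j <= (nth 0 w j).-1.
Proof.
move=> hS hD hj; have [h1 h2] := A_step hS hD hj.
case: (boolP (on_wire n w 1 j)) => [/h1[-> _ _]//|/h2[? _]]; lia.
Qed.

Lemma A_stepQ n w j : Sigma n w -> indA n w = 0 -> j < size w ->
  Q n w j.+1 = if on_wire n w 1 j then (Q n w j).+1 else Q n w j.
Proof.
move=> hS hD hj; have [h1 h2] := A_step hS hD hj.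
by case: (boolP (on_wire n w 1 j)) => [/h1[_ _ ->]|/h2[_ ->]].
Qed.

Lemma A_mono n w j1 j2 : Sigma n w -> indA n w = 0 -> j1 <= j2 <= size w ->
  Q n w j1 <= Q n w j2.
Proof.
move=> hS hD; elim: j2 => [|j2 IH] hj; first by have -> : j1 = 0 by lia.
case: (eqVneq j1 j2.+1) => [->//|hne].
have := IH (ltac:(lia)); rewrite A_stepQ //; last lia.
case: ifP => _; lia.
Qed.

Lemma Q0 n w : Q n w 0 = 0.
Proof. by rewrite /Q arr0 index_iota1 //; lia. Qed.

Lemma Qend n w : Sigma n w -> Q n w (size w) = n.
Proof. by move=> /SigmaP[_ _ ha]; rewrite /Q ha index_riota //; lia. Qed.

Lemma A_inv n w j i : Sigma n w -> indA n w = 0 -> j <= size w ->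
  i < Q n w j -> nth 0 (arr n w j) i = n.+1 - i.
Proof.
move=> hS hD; have [hs hl ha] := SigmaP hS.
move: {2}(size w - j) (erefl (size w - j)) => d.
elim: d j => [|d IH] j hd hj hi.
  have ej : j = size w by lia.
  have := Qend hS; rewrite -ej => hq.
  by rewrite ej ha nth_final; lia.
have hj' : j < size w by lia.
have hle := A_le hS hD hj'.
have hmono : Q n w j <= Q n w j.+1 by rewrite A_stepQ //; case: ifP; lia.
rewrite -(IH j.+1) ?nth_arrS //; try lia.
rewrite tau_other //; apply/eqP; lia.
Qed.

Lemma A_cross n w j : Sigma n w -> indA n w = 0 -> j < size w -> on_wire n w 1 j ->
  [/\ wireR n w j = n.+1 - Q n w j, Q n w j < n & nth 0 (arr n w j.+1) (Q n w j) = wireR n w j].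
Proof.
move=> hS hD hj hon; have [hs hl ha] := SigmaP hS.
have [e1 _] := A_step hS hD hj; have [eq1 eq2 eq3] := e1 hon.
have hp := letter hl hj.
have hn : nth 0 (arr n w j.+1) (Q n w j) = wireR n w j.
  by rewrite nth_arrS // /wireR -eq1 /tau eqxx.
split => //; last lia.
rewrite -hn A_inv //; lia.
Qed.

Lemma A_exists n w v : Sigma n w -> indA n w = 0 -> v < n ->
  exists j, [/\ j < size w, on_wire n w 1 j & Q n w j = v].
Proof.
move=> hS hD hv.
suff : forall m, m <= size w -> v < Q n w m -> exists j, [/\ j < size w, on_wire n w 1 j & Q n w j = v].
  move=> H; apply: (H (size w)) => //; rewrite Qend //; lia.
elim => [|m IH] hm hlt; first by rewrite Q0 in hlt; lia.
case: (ltnP v (Q n w m)) => h; first by apply: IH => //; lia.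
have hm' : m < size w by lia.
move: hlt; rewrite A_stepQ //.
case: ifP => hon hlt; last lia.
by exists m; split => //; lia.
Qed.

Lemma A_cross_iff n w a j : Sigma n w -> indA n w = 0 -> 1 < a <= n.+1 -> j < size w ->
  is_cross n w 1 a j = on_wire n w 1 j && (Q n w j == n.+1 - a).
Proof.
move=> hS hD ha hj.
have hlt := wire_lt hS hj.
have [_ hl _] := SigmaP hS.
have [hL _ _] := wire_prop hl hj.
have hLb := arr_pos hl (ltnW hj) hL.
apply/idP/idP.
  rewrite /is_cross hj /= => /orP[/andP[/eqP hL' /eqP hR]|/andP[/eqP hL' /eqP hR]]; last lia.
  have hon : on_wire n w 1 j by rewrite /on_wire hL' eqxx.
  have [e _ _] := A_cross hS hD hj hon.
  rewrite hon /=; apply/eqP; have := Q_lt hl (ltnW hj); lia.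
case/andP => hon /eqP hP.
have [e _ _] := A_cross hS hD hj hon.
have [h1 _] := A_step hS hD hj; have [_ hL' _] := h1 hon.
rewrite /is_cross hj hL' eqxx /=; apply/orP; left; apply/eqP; lia.
Qed.

Lemma A_frozen n w j0 i0 a j : Sigma n w -> indA n w = 0 -> j0 <= j -> j < size w ->
  i0 < Q n w j0 -> nth 0 (arr n w j0) i0 = a -> ~~ on_wire n w a j.
Proof.
move=> hS hD hj0 hj hi ha; have [hs hl hfin] := SigmaP hS.
have hPj : Q n w j0 <= Q n w j by apply: A_mono => //; lia.
have hnj : nth 0 (arr n w j) i0 = a.
  by rewrite A_inv //; [rewrite -ha A_inv //; lia | lia | lia].
have [hsz hu _] := arr_prop hl (ltnW hj).
have hle := A_le hS hD hj; have hp := letter hl hj.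
rewrite /on_wire /wireL /wireR -hnj.
rewrite (negbTE (nth_neq hu _ _ _)) ?(negbTE (nth_neq hu _ _ _)) ?hsz //; try lia.
all: apply/eqP; lia.
Qed.

Lemma A_xnode n w a : Sigma n w -> indA n w = 0 -> 1 < a <= n.+1 ->
  let t := xnode n w 1 a in
  [/\ t < size w, on_wire n w 1 t, Q n w t = n.+1 - a,
      Q n w t.+1 = n.+2 - a & nth 0 (arr n w t.+1) (Q n w t) = a].
Proof.
move=> hS hD ha /=.
have hv : n.+1 - a < n by lia.
have [j [hj hon hP]] := A_exists hS hD hv.
have hc0 : is_cross n w 1 a j by rewrite A_cross_iff // hon hP eqxx.
have [ht hc] := xnode_spec (ex_intro _ j (conj hj hc0)).
move: hc; rewrite A_cross_iff // => /andP[hon' /eqP hP'].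
have [e _ hn] := A_cross hS hD ht hon'.
have [h1 _] := A_step hS hD ht; have [_ _ hP1] := h1 hon'.
split => //; first by rewrite hP1 hP'; lia.
rewrite hn e hP'; lia.
Qed.

Lemma partA n w k : Sigma n w -> indA n w = 0 -> 1 <= k <= n ->
  rigorous n w k (compress [:: k; 1; k.+1]) /\
  peaks n w k (compress [:: k; 1; k.+1]) = [:: xnode n w 1 k.+1].
Proof.
move=> hS hD hk.
have hl : letters n w by case: (SigmaP hS).
have [ht hon hPt hPt1 hnt] := A_xnode hS hD (ltac:(lia) : 1 < k.+1 <= n.+1).
set t := xnode n w 1 k.+1 in ht hon hPt hPt1 hnt *.
have hlt := Q_lt hl (ltnW ht).
have s3 : forall x, straight n w (k.+1, (t, x)) = [::] -> True by [].
case: (ltnP 1 k) => hk1.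
  have hc : compress [:: k; 1; k.+1] = [:: k; 1; k.+1].
    rewrite /=; have -> : (k == 1) = false by apply/eqP; lia.
    by have -> : (1 == k.+1) = false by apply/eqP; lia.
  rewrite hc.
  have [ht' hon' hPt' hPt1' hnt'] := A_xnode hS hD (ltac:(lia) : 1 < k <= n.+1).
  rewrite xnode_sym in ht' hon' hPt' hPt1' hnt'.
  set t' := xnode n w k 1 in ht' hon' hPt' hPt1' hnt' *.
  have hlt' := Q_lt hl (ltnW ht').
  have htt : t < t'.
    case: (ltnP t t') => // h; have := A_mono hS hD (ltac:(lia) : t' <= t <= size w); lia.
  split; last first.
    rewrite /peaks /= /up leqnn /=; have -> : (0 < k) = true by lia. rewrite /=; have -> : (k.+1 <= k) = false by lia. done.
  apply: rig3 => //.
  - by rewrite neq_ltn htt orbT.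
  - by rewrite seg_orE leqnn.
  - by rewrite seg_orE; have -> : (1 <= k) = true by lia.
  - by rewrite seg_orE; have -> : (k.+1 <= k) = false by lia.
  - apply: straight_nil => j hj hm.
    apply: (A_frozen (j0 := t'.+1) (i0 := Q n w t')) => //; lia.
  - apply: straight_nil => j hj hm; apply/negP => hj_on.
    have [h1 _] := A_step hS hD hj; have [_ _ hPj1] := h1 hj_on.
    have := A_mono hS hD (ltac:(lia) : t.+1 <= j <= size w).
    have := A_mono hS hD (ltac:(lia) : j.+1 <= t' <= size w).
    lia.
  - apply: straight_nil => j hj hm.
    apply: (A_frozen (j0 := t.+1) (i0 := Q n w t)) => //; lia.
have ek : k = 1 by lia.
have hc : compress [:: k; 1; k.+1] = [:: 1; 2] by rewrite ek.
rewrite hc; split; last by rewrite /peaks /= /up /t ek.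
rewrite /t in ht hon hPt hPt1 hnt; clear t hlt s3; subst k.
apply: rig2 => //.
- apply: straight_nil => j hj hm; apply/negP => hj_on.
  have := A_mono hS hD (ltac:(lia) : (xnode n w 1 2).+1 <= j <= size w).
  have [_ hpos _] := A_cross hS hD hj hj_on.
  lia.
- apply: straight_nil => j hj hm.
  apply: (A_frozen (j0 := (xnode n w 1 2).+1) (i0 := Q n w (xnode n w 1 2))) => //; lia.
Qed.

Theorem mainTheorem14 (n : nat) (w : seq nat) :
  1 <= n -> Sigma n w ->
  (indD n w = 0 -> forall k, 1 <= k <= n ->
     rigorous n w k (compress [:: k; n.+1; k.+1]) /\
     peaks n w k (compress [:: k; n.+1; k.+1]) = [:: xnode n w k n.+1]) /\
  (indA n w = 0 -> forall k, 1 <= k <= n ->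
     rigorous n w k (compress [:: k; 1; k.+1]) /\
     peaks n w k (compress [:: k; 1; k.+1]) = [:: xnode n w 1 k.+1]).
Proof.
move=> hn hS; split => hD k hk; [exact: partD | exact: partA].
Qed.
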